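(* Let $\mathcal F$ be a normal TDD over a finite index set $I$ equipped with a linear order $\prec$. Then every terminal node of $\mathcal F$ has value $0$ or $1$. Moreover, if $v$ is a non-terminal node of $\mathcal F$ with $\Phi(v)\neq 0$, and $w_0,w_1$ are the weights on its low-edge and high-edge respectively, then $w_0=1$ or $w_1=1$.
   Context: Indices take values in $\{0,1\}$; a tensor over $I$ is a map $\{0,1\}^I\to\mathbb{C}$, and a tensor over a subset of $I$ is regarded as a tensor over $I$ not depending on the other indices. Each index $x$ is regarded as the tensor with $x(c)=c$, and $\overline{x}(c):=1-c$; sums, products and scalar multiples of tensors are pointwise. A TDD (Tensor Decision Diagram) over $I$ is $\mathcal F=(V,E,index,value,low,high,w)$ where: $V$ is a finite set of nodes partitioned into non-terminal nodes $V_N$ and terminal nodes $V_T$, forming a rooted directed acyclic graph with root $r_{\mathcal F}$; $index:V_N\to I$; $value:V_T\to\mathbb{C}$; $low,high:V_N\to V$ give the 0- and 1-successors; the edges are the low-edges $(v,low(v))$ and high-edges $(v,high(v))$ for $v\in V_N$, together with a unique incoming edge $e_r$ of the root having no source; $w$ assigns each edge a complex weight, and $w_{\mathcal F}:=w(e_r)$. Each node $v$ represents a tensor $\Phi(v)$: $\Phi(v)=value(v)$ if $v$ is terminal, and otherwise $\Phi(v)=w_0\cdot\overline{x_v}\cdot\Phi(low(v))+w_1\cdot x_v\cdot\Phi(high(v))$, where $x_v=index(v)$ and $w_0,w_1$ are the weights on the low- and high-edge of $v$. Normal tensors (w.r.t. $\prec$): order $\{0,1\}^I$ lexicographically (compare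 at the $\prec$-smallest differing index, $0<1$); the pivot of $\phi$ is the lexicographically smallest $\vec a$ with $|\phi(\vec a)|=\max_{\vec b}|\phi(\vec b)|$; $\phi$ is normal if $\phi=0$ or $\phi$ takes value $1$ at its pivot. A TDD $\mathcal F$ is normal if $\Phi(v)$ is a normal tensor for every node $v$ of $\mathcal F$.
   Formalization: The TDD $\mathcal F$ is also ordered: for every non-terminal node v, index(v) ≺ index(low(v)) when low(v) is non-terminal, and index(v) ≺ index(high(v)) when high(v) is non-terminal. The paper assumes this as well. *)

(* Defs.v *)
From HB Require Import structures.
From mathcomp Require Import all_boot all_order all_algebra.
Set Implicit Arguments. Unset Strict Implicit. Unset Printing Implicit Defensive.
Import Order.TTheory GRing.Theory Num.Theory.
Local Open Scope ring_scope.

(* Complex numbers are modelled by an arbitrary numClosedFieldType C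
   (e.g. complex R for R : rcfType, or algC); |.| is its norm. *)

Section TDDDefs.
Variables (I : finType) (C : numClosedFieldType).

Definition assignment := {ffun I -> bool}.
Definition tensor := assignment -> C.

Definition idx_tensor (x : I) : tensor := fun a => (a x : nat)%:R.
Definition idx_tensor_bar (x : I) : tensor := fun a => 1 - (a x : nat)%:R.

Definition zero_tensor : tensor := fun _ => 0.

(* lexicographic order on {0,1}^I w.r.t. prec: compare at the
   prec-smallest differing index, 0 < 1 *)
Definition lexlt (prec : rel I) (a b : assignment) : bool :=
  [exists i, [&& ~~ a i, b i & [forall j, prec j i ==> (a j == b j)]]].

Definition is_pivot (prec : rel I) (phi : tensor) (a : assignment) : Prop :=
  (forall b, `|phi b| <= `|phi a|) /\
  (forall b, `|phi b| = `|phi a| -> b = a \/ lexlt prec a b).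

Definition normal_tensor (prec : rel I) (phi : tensor) : Prop :=
  phi = zero_tensor \/ exists a, is_pivot prec phi a /\ phi a = 1.

End TDDDefs.

(* Nodes form a finite type; [kind v = None] means v is
   terminal, [kind v = Some x] means v is non-terminal with index x.
   [low], [high], [wlow], [whigh] are only meaningful on non-terminal nodes
   ([wlow v], [whigh v] are the weights of the low- and high-edge of v),
   [value] only on terminal nodes, [wroot] is the weight of the root edge. *)
Record TDD (I : finType) (C : numClosedFieldType) := MkTDD {
  node : finType;
  root : node;
  kind : node -> option I;
  value : node -> C;
  low : node -> node;
  high : node -> node;
  wlow : node -> C;
  whigh : node -> C;
  wroot : C
}.

Arguments root {I C} F : rename.
Arguments kind {I C} F _ : rename.
Arguments value {I C} F _ : rename.
Arguments low {I C} F _ : rename.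
Arguments high {I C} F _ : rename.
Arguments wlow {I C} F _ : rename.
Arguments whigh {I C} F _ : rename.
Arguments wroot {I C} F : rename.

Unset Implicit Arguments.
Section TDDSem.
Variables (I : finType) (C : numClosedFieldType).

Definition succ (F : TDD I C) : rel (node F) :=
  fun u w => (kind F u != None) && ((w == low F u) || (w == high F u)).

Definition rooted (F : TDD I C) : Prop :=
  forall v, connect (succ F) (root F) v.

(* ordered: indices strictly increase along edges between non-terminal nodes
   (this also makes the graph acyclic) *)
Definition ordered (prec : rel I) (F : TDD I C) : Prop :=
  forall (v : node F) x, kind F v = Some x ->
    (forall y, kind F (low F v) = Some y -> prec x y) /\
    (forall y, kind F (high F v) = Some y -> prec x y).

(* Phi is the semantics of the nodes: it satisfies the defining equations
   (unique since the graph is acyclic) *)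
Definition Phi_spec (F : TDD I C) (Phi : node F -> tensor I C) : Prop :=
  forall (v : node F), match kind F v with
  | None => Phi v = (fun _ => value F v)
  | Some x => Phi v = (fun a => wlow F v * @idx_tensor_bar I C x a * Phi (low F v) a
                               + whigh F v * @idx_tensor I C x a * Phi (high F v) a)
  end.

Definition normal_TDD (prec : rel I) (F : TDD I C) (Phi : node F -> tensor I C)
  : Prop := forall v, normal_tensor prec (Phi v).

End TDDSem.
Arguments succ {I C} F.
Arguments rooted {I C} F.
Arguments ordered {I C} prec F.
Arguments Phi_spec {I C} F Phi.
Arguments normal_TDD {I C} prec F Phi.

(* Main.v *)
Require Import Defs.
From mathcomp Require Import all_boot all_order all_algebra.
Import Order.TTheory GRing.Theory Num.Theory.
Local Open Scope ring_scope.

Section Aux.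
Variables (I : finType) (C : numClosedFieldType) (prec : rel I).
Hypothesis prec_irr : irreflexive prec.
Hypothesis prec_trans : transitive prec.
Variables (F : TDD I C) (Phi : node F -> tensor I C).
Hypothesis Hord : ordered prec F.
Hypothesis HPhi : Phi_spec F Phi.

Definition cnt (u : node F) :=
  #|[pred j | if kind F u is Some y then prec y j else false]|.

Lemma cnt_child u y w z : kind F u = Some y -> kind F w = Some z ->
  (forall z, kind F w = Some z -> prec y z) -> (cnt w < cnt u)%N.
Proof.
move=> ku kw hw; rewrite /cnt ku kw.
apply: proper_card; apply/properP; split.
  apply/subsetP => j; rewrite !inE => hj.
  by apply: prec_trans (hw z kw) hj.
by exists z; rewrite !inE ?prec_irr ?(hw z kw).
Qed.

Lemma indep u i : (forall y, kind F u = Some y -> prec i y) ->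
  forall a b : assignment I, (forall j, j != i -> a j = b j) -> Phi u a = Phi u b.
Proof.
suff H : forall n u, (cnt u < n)%N -> (forall y, kind F u = Some y -> prec i y) ->
  forall a b : assignment I, (forall j, j != i -> a j = b j) -> Phi u a = Phi u b.
  by apply: (H (cnt u).+1).
elim=> [//|n IH] {}u hn hu a b hab.
have hs := HPhi u.
case ku: (kind F u) hs => [y|] -> //.
have [hl hh] := Hord _ _ ku.
have hy : a y = b y.
  apply: hab; apply/eqP => e; have := hu y ku; rewrite e prec_irr //.
have hc : forall w, (forall z, kind F w = Some z -> prec y z) ->
    Phi w a = Phi w b.
  move=> w hw; case kw: (kind F w) => [z|]; last first.
    by have := HPhi w; rewrite kw => ->.
  apply: IH => //.
  - exact: leq_trans (cnt_child _ _ _ _ ku kw hw) hn.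
  - by move=> z' kz; apply: prec_trans (hu y ku) (hw z' kz).
by rewrite /idx_tensor /idx_tensor_bar hy (hc _ hl) (hc _ hh).
Qed.
End Aux.


Section Key.
Variables (I : finType) (C : numClosedFieldType) (prec : rel I).
Hypothesis prec_irr : irreflexive prec.
Hypothesis prec_total : forall i j, i != j -> prec i j || prec j i.

Lemma lex_contra (a a0 c c' : assignment I) x :
  a0 x = c x -> c' x = a x -> (forall j, j != x -> c' j = c j) ->
  (forall j, j != x -> a0 j = a j) ->
  lexlt prec c a0 -> lexlt prec a c' -> False.
Proof.
move=> h0 h1 hc ha /existsP[i /and3P[ci ai /forallP hi]]
  /existsP[k /and3P[ak ck /forallP hk]].
have ix : i != x by apply/eqP => e; move: ci ai; rewrite e h0 => /negbTE ->.
have kx : k != x by apply/eqP => e; move: ak ck; rewrite e h1 => /negbTE ->.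
rewrite ha // in ai; rewrite hc // in ck.
case: (eqVneq i k) => [e|ne].
  by move: ai ak; rewrite e => ->.
case/orP: (prec_total _ _ ne) => p.
  by move: (implyP (hk i) p); rewrite hc // ai (negbTE ci).
by move: (implyP (hi k) p); rewrite ha // ck (negbTE ak).
Qed.

Definition upd (c : assignment I) x (t : bool) : assignment I :=
  [ffun j => if j == x then t else c j].

Lemma key (f L : tensor I C) (w : C) x (a : assignment I) :
  (forall b : assignment I, b x = a x -> f b = w * L b) ->
  (forall b b' : assignment I, (forall j, j != x -> b j = b' j) -> L b = L b') ->
  is_pivot prec f a -> f a = 1 -> normal_tensor prec L -> w = 1.
Proof.
move=> hf hL [fmax fmin] fa [L0|[c [[Lmax Lmin] Lc]]].
  by move: fa; rewrite hf // L0 /zero_tensor mulr0 => /eqP; rewrite eq_sym oner_eq0.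
set c' := upd c x (a x).
set a0 := upd a x (c x).
have hc' : forall j, j != x -> c' j = c j by move=> j /negbTE h; rewrite ffunE h.
have ha0 : forall j, j != x -> a0 j = a j by move=> j /negbTE h; rewrite ffunE h.
have Lc' : L c' = 1 by rewrite (hL _ c hc').
have La0 : L a0 = L a by apply: hL.
have fc' : f c' = w by rewrite hf ?Lc' ?mulr1 // ffunE eqxx.
have wle : `|w| <= 1 by have := fmax c'; rewrite fc' fa normr1.
have Lale : `|L a| <= 1 by have := Lmax a; rewrite Lc normr1.
have fa' : w * L a = 1 by rewrite -hf.
have w1 : `|w| = 1.
  apply/eqP; rewrite eq_le wle /=.
  have : `|w * L a| <= `|w| by rewrite normrM ler_piMr.
  by rewrite fa' normr1.
have La1 : `|L a| = 1.
  by move: (congr1 (fun z => `|z|) fa'); rewrite normrM w1 mul1r normr1.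
have [e|lt1] : a0 = c \/ lexlt prec c a0 by apply: Lmin; rewrite La0 La1 Lc normr1.
  by move: fa'; rewrite -La0 e Lc mulr1.
have [e|lt2] : c' = a \/ lexlt prec a c' by apply: fmin; rewrite fc' fa w1 normr1.
  by move: fa'; rewrite -e Lc' mulr1.
exfalso; apply: (lex_contra a a0 c c' x) => //.
  by rewrite ffunE eqxx.
by rewrite ffunE eqxx.
Qed.
End Key.


Theorem lemma3 (I : finType) (C : numClosedFieldType) (prec : rel I)
    (prec_irr : irreflexive prec) (prec_trans : transitive prec)
    (prec_total : forall i j, i != j -> prec i j || prec j i)
    (F : TDD I C) (Phi : node F -> tensor I C) :
  rooted F -> ordered prec F -> Phi_spec F Phi -> normal_TDD prec F Phi ->
  (forall v, kind F v = None -> value F v = 0 \/ value F v = 1) /\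
  (forall v x, kind F v = Some x -> Phi v <> @zero_tensor I C ->
     wlow F v = 1 \/ whigh F v = 1).
Proof.
move=> _ Hord HPhi Hn; split.
  move=> v kv; have := HPhi v; rewrite kv => hv.
  case: (Hn v) => [h0|[a [_ ha]]].
    by left; have := congr1 (fun g => g [ffun=> false]) h0; rewrite hv.
  by right; rewrite hv in ha.
move=> v x kv nz.
have hv := HPhi v; rewrite kv in hv.
case: (Hn v) => [//|[a [piv fa]]].
case ax: (a x).
  right; apply: (@key _ _ _ prec_total (Phi v) (Phi (high F v)) _ x a) => //.
  - move=> b bx; rewrite hv /idx_tensor /idx_tensor_bar bx ax /=.
    by rewrite subrr !mulr0 mul0r add0r mulr1.
  - move=> b b' hb; apply: (@indep _ _ _ prec_irr prec_trans _ _ Hord HPhi _ x) hb => y ky.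
    by have [_ h] := Hord _ _ kv; apply: h.
left; apply: (@key _ _ _ prec_total (Phi v) (Phi (low F v)) _ x a) => //.
- move=> b bx; rewrite hv /idx_tensor /idx_tensor_bar bx ax /=.
  by rewrite subr0 !mulr0 mul0r addr0 mulr1.
- move=> b b' hb; apply: (@indep _ _ _ prec_irr prec_trans _ _ Hord HPhi _ x) hb => y ky.
  by have [h _] := Hord _ _ kv; apply: h.
Qed.
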